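(* Let $A^n,A^{n+1}$ be real $N\times N$ matrices satisfying condition (M), let $D=\mathrm{diag}(d_{11},\dots,d_{NN})$ with $d_{ii}>0$ and $\sum_i d_{ii}a^{n+1}_{ij}\ge0$ for all $j$, and let $B^n(\cdot),B^{n+1}(\cdot)$ be limiter-dependent matrices with $\sum_i d_{ii}b^{k}_{ij}(\alpha)=0$ for all $j$, all $\alpha$, $k=n,n+1$. Let $\sigma\in[0,1]$, $\gamma\in(0,1)$, $s_j=d_{jj}+\Delta t\,\sigma\sum_i d_{ii}a^{n+1}_{ij}$, and let $\Delta t>0$ satisfy $$\Delta t\max\left\{(1-\sigma)\|DB^n(\mathbf 1)\|_1,\ \sigma\|DB^{n+1}(\mathbf 1)\|_1\right\}\le\gamma\min_j s_j .$$ Let $y^n,g\in\mathbb R^N$, let $(\alpha^{n,p},\alpha^{n+1,p})\in[0,1]^{N-1}\times[0,1]^{N-1}$ for $p\ge1$ be arbitrary, set $y^{n+1,0}=y^n$ and define $y^{n+1,p}$ for $p\ge1$ by $$\left[E+\Delta t\,\sigma A^{n+1}\right]y^{n+1,p}=\left[E-\Delta t(1-\sigma)\left(A^n-B^n(\alpha^{n,p})\right)\right]y^n+\Delta t\,\sigma B^{n+1}(\alpha^{n+1,p})y^{n+1,p-1}+\Delta t\,g .$$ Put $T_p=\Delta t(1-\sigma)[E+\Delta t\sigma A^{n+1}]^{-1}B^n(\alpha^{n,p})$, $Q_p=\Delta t\,\sigma[E+\Delta t\sigma A^{n+1}]^{-1}B^{n+1}(\alpha^{n+1,p})$, $r=[E+\Delta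 t\sigma A^{n+1}]^{-1}\{[E-\Delta t(1-\sigma)A^n]y^n+\Delta t\,g\}$. Then for every $p\ge1$ $$y^{n+1,p}=\Big[\sum_{i=1}^pQ_pQ_{p-1}\cdots Q_{i+1}T_i+Q_pQ_{p-1}\cdots Q_1\Big]y^n+\Big[E+\sum_{i=2}^pQ_pQ_{p-1}\cdots Q_i\Big]r$$ (empty products being $E$), and $\|T_p\|_1\le\gamma$, $\|Q_p\|_1\le\gamma$ for all $p$; in particular each product of $m$ factors from $\{T_i\}\cup\{Q_i\}$ appearing above has $\|\cdot\|_1$-norm at most $\gamma^m$, so the terms are dominated, uniformly in $p$, by those of a convergent geometric series.
   Context: $E$ is the $N\times N$ identity. Condition (M) on a real $N\times N$ matrix $A=\{a_{ij}\}$: $a_{ii}\ge 0$ for all $i$ and $a_{ij}\le 0$ for all $i\ne j$. Norms: $\|y\|_1=\sum_i|y_i|$, $\|M\|_1=\max_j\sum_i|m_{ij}|$. A limiter-dependent matrix is a map $\alpha=(\alpha_1,\dots,\alpha_{N-1})\in\mathbb R^{N-1}\mapsto B(\alpha)=\{b_{ij}(\alpha)\}$ ($N\times N$) of the form $b_{ij}(\alpha)=\alpha_{\kappa(i,j)}\beta_{ij}$ for $i\ne j$ and $b_{ii}(\alpha)=-\sum_{j\ne i}b_{ij}(\alpha)$, where $\beta_{ij}\le0$ are fixed numbers and $\kappa(i,j)\in\{1,\dots,N-1\}$ are fixed indices. $\mathbf 1$ is the vector with all entries $1$. *)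

(* Defs.v *)
From HB Require Import structures.
From mathcomp Require Import all_boot all_order all_algebra.
Set Implicit Arguments. Unset Strict Implicit. Unset Printing Implicit Defensive.
Import Order.TTheory GRing.Theory Num.Theory.
Local Open Scope ring_scope.

Definition condM (R : realFieldType) (N : nat) (A : 'M[R]_N) : Prop :=
  (forall i, 0 <= A i i) /\ (forall i j, i != j -> A i j <= 0).

Definition norm1 (R : realFieldType) (N : nat) (M : 'M[R]_N) : R :=
  \big[Num.max/0]_(j < N) \sum_(i < N) `|M i j|.

(* B is a limiter-dependent matrix: alpha in R^{N-1} (row vector of size N.-1),
   b_ij(alpha) = alpha_{kappa(i,j)} beta_ij (i <> j), beta_ij <= 0,
   b_ii(alpha) = - sum_{j <> i} b_ij(alpha).  kappa is only needed for i <> j. *)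
Definition limiter_matrix (R : realFieldType) (N : nat)
    (B : 'rV[R]_(N.-1) -> 'M[R]_N) : Prop :=
  exists (beta : 'M[R]_N) (kappa : forall i j : 'I_N, i != j -> 'I_(N.-1)),
    (forall i j, i != j -> beta i j <= 0) /\
    (forall alpha i j (h : i != j), B alpha i j = alpha ord0 (kappa i j h) * beta i j) /\
    (forall alpha i, B alpha i i = - \sum_(j < N | j != i) B alpha i j).

(* prodQ Q i k = Q_{i+k-1} *m ... *m Q_{i+1} *m Q_i  (k factors; k = 0 gives E) *)
Fixpoint prodQ (R : realFieldType) (N : nat) (Q : nat -> 'M[R]_N) (i k : nat)
  : 'M[R]_N :=
  match k with
  | 0 => 1%:M
  | k'.+1 => Q (i + k')%N *m prodQ Q i k'
  end.

(* Main.v *)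
Require Import Defs.
From HB Require Import structures.
From mathcomp Require Import all_boot all_order all_algebra.
From mathcomp Require Import zify.
Import Order.TTheory GRing.Theory Num.Theory.
Local Open Scope ring_scope.
Set Implicit Arguments. Unset Strict Implicit.

Lemma lemaxr (R : realFieldType) (x y z : R) : (z <= Num.max x y) = (z <= x) || (z <= y).
Proof. exact: le_max. Qed.
Lemma gemaxr (R : realFieldType) (x y z : R) : (Num.max x y <= z) = (x <= z) && (y <= z).
Proof. exact: ge_max. Qed.

Lemma maxl_ge (R : realFieldType) (x y : R) : x <= Num.max x y.
Proof. by rewrite lemaxr lexx. Qed.
Lemma maxr_ge (R : realFieldType) (x y : R) : y <= Num.max x y.
Proof. by rewrite lemaxr lexx orbT. Qed.

Lemma norm1E (R : realFieldType) N (P : 'M[R]_N) :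
  norm1 P = \big[Num.max/0]_(j < N) \sum_(i < N) `|P i j|.
Proof. by []. Qed.

Lemma norm1_ge0 (R : realFieldType) N (P : 'M[R]_N) : 0 <= norm1 P.
Proof.
rewrite norm1E; elim/big_ind: _ => //= [x y hx hy|j _]; first by rewrite lemaxr hx.
by rewrite sumr_ge0.
Qed.

Lemma colsum_le (R : realFieldType) N (P : 'M[R]_N) j : \sum_i `|P i j| <= norm1 P.
Proof. by rewrite norm1E [X in _ <= X](bigD1 j) //= lemaxr lexx. Qed.

Lemma norm1_le (R : realFieldType) N (P : 'M[R]_N) c :
  0 <= c -> (forall j, \sum_i `|P i j| <= c) -> norm1 P <= c.
Proof.
move=> c0 h; rewrite norm1E; elim/big_ind: _ => // x y hx hy.
by rewrite gemaxr hx hy.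
Qed.

Lemma norm1M (R : realFieldType) N (P Q : 'M[R]_N) :
  norm1 (P *m Q) <= norm1 P * norm1 Q.
Proof.
apply: norm1_le; first by rewrite mulr_ge0 // norm1_ge0.
move=> j.
apply: (@le_trans _ _ (\sum_i \sum_k `|P i k| * `|Q k j|)).
  apply: ler_sum => i _; rewrite mxE; apply: le_trans (ler_norm_sum _ _ _) _.
  by apply: ler_sum => k _; rewrite normrM.
rewrite exchange_big /=.
apply: (@le_trans _ _ (\sum_k norm1 P * `|Q k j|)).
  apply: ler_sum => k _; rewrite -mulr_suml.
  by apply: ler_wpM2r; [exact: normr_ge0 | exact: colsum_le].
by rewrite -mulr_sumr; apply: ler_wpM2l; [exact: norm1_ge0 | exact: colsum_le].
Qed.

Lemma norm1_1 (R : realFieldType) N : norm1 (1%:M : 'M[R]_N) <= 1.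
Proof.
apply: norm1_le => // j; rewrite (bigD1 j) //= big1 ?addr0.
  by rewrite mxE eqxx mulr1n normr1.
by move=> i hi; rewrite mxE (negbTE hi) mulr0n normr0.
Qed.

Lemma keyineq (R : realFieldType) N (M X : 'M[R]_N) (d : 'I_N -> R) :
  (forall i, 0 <= M i i) -> (forall i j, i != j -> M i j <= 0) ->
  (forall i, 0 <= d i) ->
  forall j, \sum_k (\sum_i d i * M i k) * `|X k j| <= \sum_i d i * `|(M *m X) i j|.
Proof.
move=> hd hoff hd0 j.
have step : forall i, \sum_k M i k * `|X k j| <= `|(M *m X) i j|.
  move=> i; rewrite mxE (bigD1 i) //= [X in _ <= `|X|](bigD1 i) //=.
  apply: le_trans (lerB_normD _ _).
  rewrite normrM (ger0_norm (hd i)) lerD2l.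
  rewrite lerNr -sumrN.
  apply: le_trans (ler_norm_sum _ _ _) _.
  apply: ler_sum => k hk; rewrite normrM ler0_norm ?mulNr //.
  by apply: hoff; rewrite eq_sym.
apply: (@le_trans _ _ (\sum_i d i * \sum_k M i k * `|X k j|)).
  rewrite (eq_bigr (fun k => \sum_i d i * M i k * `|X k j|)); last first.
    by move=> k _; rewrite mulr_suml.
  rewrite exchange_big /= le_eqVlt; apply/orP; left; apply/eqP; apply: eq_bigr => i _.
  by rewrite mulr_sumr; apply: eq_bigr => k _; rewrite mulrA.
by apply: ler_sum => i _; apply: ler_wpM2l.
Qed.

Lemma unit_of (R : realFieldType) N (M : 'M[R]_N) (d : 'I_N -> R) :
  (forall i, 0 <= M i i) -> (forall i j, i != j -> M i j <= 0) -> (forall i, 0 <= d i) ->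
  (forall k, 0 < \sum_i d i * M i k) -> M \in unitmx.
Proof.
move=> h1 h2 h3 h4.
have C0 : cokermx M = 0.
  apply/matrixP => k j; rewrite [RHS]mxE.
  have := @keyineq _ _ _ (cokermx M) _ h1 h2 h3 j; rewrite mulmx_coker.
  rewrite [X in _ <= X]big1 => [hle|i _]; last by rewrite mxE normr0 mulr0.
  have hge : forall k, true -> 0 <= (\sum_i d i * M i k) * `|cokermx M k j|.
    by move=> k' _; rewrite mulr_ge0 // ltW.
  have e : \sum_k (\sum_i d i * M i k) * `|cokermx M k j| = 0.
    by apply: le_anti; rewrite hle sumr_ge0.
  have := psumr_eq0P hge e (i := k) isT.
  move/eqP; rewrite mulf_eq0 (gt_eqF (h4 k)) /= normr_eq0.
  by move/eqP.
have := mxrank_coker M; rewrite C0 mxrank0 => e.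
by rewrite -row_full_unit /row_full eqn_leq rank_leq_col /= -subn_eq0 -e.
Qed.

Lemma limiter_le (R : realFieldType) N (B : 'rV[R]_(N.-1) -> 'M[R]_N) (alpha : 'rV[R]_(N.-1)) :
  limiter_matrix B -> (forall k, 0 <= alpha ord0 k <= 1) ->
  forall i j, `|B alpha i j| <= `|B (const_mx 1) i j|.
Proof.
case=> beta [kappa [hb [hoff hdiag]]] ha i j.
case: (eqVneq i j) => [<-|hij]; last first.
  rewrite !(hoff _ _ _ hij) mxE mul1r normrM.
  have /andP[a0 a1] := ha (kappa i j hij).
  by rewrite (ger0_norm a0) ler_piMl.
rewrite !hdiag.
have key : forall k, k != i -> B (const_mx 1) i k <= B alpha i k <= 0.
  move=> k hk; rewrite eq_sym in hk.
  rewrite !(hoff _ _ _ hk) mxE mul1r.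
  have /andP[a0 a1] := ha (kappa i k hk).
  have b0 := hb _ _ hk.
  apply/andP; split; first by rewrite -subr_ge0 -{2}(mul1r (beta i k)) -mulrBl mulr_le0 // subr_le0.
  by rewrite mulr_ge0_le0.
rewrite !ger0_norm ?oppr_ge0.
- by rewrite lerN2; apply: ler_sum => k hk; case/andP: (key k hk).
- by apply: sumr_le0 => k hk; case/andP: (key k hk) => h1 h2; apply: le_trans h1 h2.
- by apply: sumr_le0 => k hk; case/andP: (key k hk).
Qed.

Lemma normT (R : realFieldType) N (M B : 'M[R]_N) (d s : 'I_N -> R) c C gamma :
  M \in unitmx -> (forall i, 0 <= M i i) -> (forall i j, i != j -> M i j <= 0) ->
  (forall i, 0 <= d i) ->
  (forall k, s k = \sum_i d i * M i k) -> (forall k, 0 < s k) -> 0 <= c -> 0 <= C ->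
  0 <= gamma ->
  (forall j, \sum_i d i * `|B i j| <= C) -> (forall k, c * C <= gamma * s k) ->
  norm1 (c *: (invmx M *m B)) <= gamma.
Proof.
move=> hu h1 h2 h3 hs hsp c0 C0 g0 hB hc; apply: norm1_le => // j.
set X := invmx M *m B.
have hk := @keyineq _ _ _ X _ h1 h2 h3 j; rewrite mulKVmx // in hk.
have hk2 : \sum_k s k * `|X k j| <= C.
  under eq_bigr => k _ do rewrite hs.
  exact: le_trans hk (hB j).
under eq_bigr => i _ do rewrite mxE normrM (ger0_norm c0).
rewrite -mulr_sumr.
case: (eqVneq C 0) => [Ce|Cn0].
  have hge : forall k, true -> 0 <= s k * `|X k j|.
    by move=> k' _; rewrite mulr_ge0 // ltW.
  have e : \sum_k s k * `|X k j| = 0 by apply: le_anti; rewrite -{2}Ce hk2 sumr_ge0.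
  rewrite big1 ?mulr0 // => k _.
  have := psumr_eq0P hge e (i := k) isT.
  by move/eqP; rewrite mulf_eq0 (gt_eqF (hsp k)) /= => /eqP.
have Cp : 0 < C by rewrite lt_def Cn0.
rewrite -(ler_pM2l Cp).
apply: (@le_trans _ _ (gamma * \sum_k s k * `|X k j|)); last by rewrite (mulrC C) ler_wpM2l.
rewrite mulrA (mulrC C) !mulr_sumr; apply: ler_sum => k _.
by rewrite mulrA ler_wpM2r.
Qed.

Lemma acE (V : zmodType) (r t a b q c : V) : r + t + (a + b + (q + c)) = a + t + b + (r + (c + q)).
Proof.
have h : r + t + a + b = a + t + b + r.
  by rewrite (addrAC r t a) (addrC r a) (addrAC a r t) (addrAC (a+t) r b).
by rewrite (addrC c q) !addrA h.
Qed.
Lemma acE2 (V : zmodType) (a x y : V) : a - (x - y) = (a - x) + y.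
Proof. by rewrite opprB addrCA addrC. Qed.
Lemma acE3 (V : zmodType) (a b c e : V) : a + b + c + e = (a + e) + b + c.
Proof. by rewrite addrAC (addrAC a). Qed.

Lemma prodQS (R : realFieldType) N (Q : nat -> 'M[R]_N) i k n :
  (i + k)%N = n -> Q n *m prodQ Q i k = prodQ Q i k.+1.
Proof. by move=> <-. Qed.

Unset Implicit Arguments.
Set Strict Implicit.

Theorem theorem7 (R : realFieldType) (N : nat)
  (An An1 : 'M[R]_N) (d : 'I_N -> R)
  (Bn Bn1 : 'rV[R]_(N.-1) -> 'M[R]_N)
  (sigma gamma dt : R) (yn g : 'cV[R]_N)
  (alphan alphan1 : nat -> 'rV[R]_(N.-1))
  (y : nat -> 'cV[R]_N) :
  condM An -> condM An1 ->
  (forall i, 0 < d i) ->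
  (forall j, 0 <= \sum_(i < N) d i * An1 i j) ->
  limiter_matrix Bn -> limiter_matrix Bn1 ->
  (forall alpha j, \sum_(i < N) d i * Bn alpha i j = 0) ->
  (forall alpha j, \sum_(i < N) d i * Bn1 alpha i j = 0) ->
  0 <= sigma <= 1 -> 0 < gamma < 1 -> 0 < dt ->
  (let D := diag_mx (\row_i d i) in
   let s := fun j => d j + dt * sigma * \sum_(i < N) d i * An1 i j in
   forall j, dt * Num.max ((1 - sigma) * norm1 (D *m Bn (const_mx 1)))
                          (sigma * norm1 (D *m Bn1 (const_mx 1)))
             <= gamma * s j) ->
  (forall p, (1 <= p)%N -> forall k, 0 <= alphan p ord0 k <= 1 /\ 0 <= alphan1 p ord0 k <= 1) ->
  y 0%N = yn ->
  (forall p, (1 <= p)%N ->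
     (1%:M + (dt * sigma) *: An1) *m y p =
       (1%:M - (dt * (1 - sigma)) *: (An - Bn (alphan p))) *m yn
       + (dt * sigma) *: (Bn1 (alphan1 p) *m y p.-1) + dt *: g) ->
  let M := 1%:M + (dt * sigma) *: An1 in
  let T := fun p => (dt * (1 - sigma)) *: (invmx M *m Bn (alphan p)) in
  let Q := fun p => (dt * sigma) *: (invmx M *m Bn1 (alphan1 p)) in
  let r := invmx M *m ((1%:M - (dt * (1 - sigma)) *: An) *m yn + dt *: g) in
  (forall p, (1 <= p)%N ->
     y p = (\sum_(1 <= i < p.+1) prodQ Q i.+1 (p - i) *m T i + prodQ Q 1 p) *m yn
           + (1%:M + \sum_(2 <= i < p.+1) prodQ Q i (p.+1 - i)) *m r)
  /\ (forall p, (1 <= p)%N -> norm1 (T p) <= gamma /\ norm1 (Q p) <= gamma)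
  /\ (forall i k, (1 <= i)%N -> norm1 (prodQ Q i k) <= gamma ^+ k)
  /\ (forall i k, (1 <= i)%N -> norm1 (prodQ Q i.+1 k *m T i) <= gamma ^+ k.+1).
Proof.
move=> hA hA1 hd hdA1 hBn hBn1 _ _ /andP[s0 s1] /andP[g0 g1] dt0 hmax halpha hy0 hrec M T Q r.
set c1 := dt * sigma.
set c2 := dt * (1 - sigma).
have c1p : 0 <= c1 by rewrite mulr_ge0 // ltW.
have c2p : 0 <= c2 by rewrite mulr_ge0 ?subr_ge0 // ltW.
case: hA1 => hA1d hA1o.
have hMii : forall i, 0 <= M i i.
  by move=> i; rewrite !mxE eqxx mulr1n addr_ge0 // mulr_ge0.
have hMij : forall i j, i != j -> M i j <= 0.
  by move=> i j hij; rewrite !mxE (negbTE hij) mulr0n add0r mulr_ge0_le0 // hA1o.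
set s := fun k => \sum_i d i * M i k.
have hs : forall k, s k = d k + c1 * \sum_i d i * An1 i k.
  move=> k; rewrite /s.
  under eq_bigr => i _ do rewrite !mxE mulrDr mulrCA.
  rewrite big_split /= -mulr_sumr; congr (_ + _).
  rewrite (bigD1 k) //= eqxx mulr1n mulr1 big1 ?addr0 // => i hi.
  by rewrite (negbTE hi) mulr0n mulr0.
have hsp : forall k, 0 < s k.
  by move=> k; rewrite hs ltr_wpDr // mulr_ge0.
have hd0 : forall i, 0 <= d i by move=> i; exact: ltW.
have hu : M \in unitmx by apply: (@unit_of _ _ _ d).
have hmax' : forall j, dt * Num.max ((1 - sigma) * norm1 (diag_mx (\row_i d i) *m Bn (const_mx 1)))
                          (sigma * norm1 (diag_mx (\row_i d i) *m Bn1 (const_mx 1)))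
             <= gamma * s j.
  by move=> j; rewrite hs; exact: (hmax j).
have hBbound : forall (B : 'rV[R]_(N.-1) -> 'M[R]_N) (alpha : 'rV[R]_(N.-1)), limiter_matrix B ->
    (forall k, 0 <= alpha ord0 k <= 1) ->
    forall j, \sum_i d i * `|B alpha i j| <= norm1 (diag_mx (\row_i d i) *m B (const_mx 1)).
  move=> B alpha hB ha j; apply: le_trans (colsum_le _ j).
  apply: ler_sum => i _; rewrite mul_diag_mx !mxE normrM (gtr0_norm (hd i)).
  by rewrite ler_wpM2l // limiter_le.
have hTQ : forall p, (1 <= p)%N -> norm1 (T p) <= gamma /\ norm1 (Q p) <= gamma.
  move=> p hp; split.
    apply: (normT (d:=d) (s:=s) (C:=norm1 (diag_mx (\row_i d i) *m Bn (const_mx 1)))) => //.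
    - exact: norm1_ge0.
    - exact: ltW.
    - by apply: hBbound => // k; case: (halpha p hp k).
    - move=> k; apply: le_trans (hmax' k); rewrite /c2 -mulrA.
      apply: ler_wpM2l; [exact: ltW | exact: maxl_ge].
  apply: (normT (d:=d) (s:=s) (C:=norm1 (diag_mx (\row_i d i) *m Bn1 (const_mx 1)))) => //.
  - exact: norm1_ge0.
  - exact: ltW.
  - by apply: hBbound => // k; case: (halpha p hp k).
  - move=> k; apply: le_trans (hmax' k); rewrite /c1 -mulrA.
    apply: ler_wpM2l; [exact: ltW | exact: maxr_ge].
have hP : forall i k, (1 <= i)%N -> norm1 (prodQ Q i k) <= gamma ^+ k.
  move=> i k hi; elim: k => [|k IH]; first by rewrite expr0 norm1_1.
  rewrite /= exprS; apply: le_trans (norm1M _ _) _.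
  apply: ler_pM; rewrite ?norm1_ge0 //.
  by case: (hTQ (i + k)%N); rewrite ?(leq_trans hi) ?leq_addr.
split; last split => //; last split => //; last first.
  move=> i k hi; apply: le_trans (norm1M _ _) _; rewrite exprSr.
  apply: ler_pM; rewrite ?norm1_ge0 //; first exact: hP.
  by case: (hTQ i hi).
have hstep : forall p, (1 <= p)%N -> y p = r + T p *m yn + Q p *m y p.-1.
  move=> p hp; rewrite -(mulKmx hu (y p)) hrec // scalerBr acE2 mulmxDl acE3.
  rewrite !mulmxDr /r /T /Q mulmxDr -!scalemxAl -!mulmxA -!scalemxAr.
  by [].
have main : forall p, y p.+1 =
    (\sum_(1 <= i < p.+2) prodQ Q i.+1 (p.+1 - i) *m T i + prodQ Q 1 p.+1) *m yn
    + (1%:M + \sum_(2 <= i < p.+2) prodQ Q i (p.+2 - i)) *m r.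
  elim=> [|p IH].
    rewrite hstep // hy0 big_nat1 big_geq // subnn /= addn0 mulmx1 !mul1mx addr0.
    by rewrite mulmxDl mul1mx [RHS]addrC addrA.
  rewrite (hstep p.+2) // IH (big_nat_recr p.+2 1) // (big_nat_recr p.+2 2) //.
  rewrite subnn subSnn /= addn0 mulmx1 mul1mx.
  have E1 : \sum_(1 <= i < p.+2) prodQ Q i.+1 (p.+2 - i) *m T i
      = Q p.+2 *m \sum_(1 <= i < p.+2) prodQ Q i.+1 (p.+1 - i) *m T i.
    rewrite mulmx_sumr; apply: eq_big_nat => i /andP[_ hi].
    have -> : (p.+2 - i = (p.+1 - i).+1)%N by lia.
    by rewrite mulmxA (@prodQS _ _ Q _ _ p.+2) //; lia.
  have E2 : \sum_(2 <= i < p.+2) prodQ Q i (p.+3 - i)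
      = Q p.+2 *m \sum_(2 <= i < p.+2) prodQ Q i (p.+2 - i).
    rewrite mulmx_sumr; apply: eq_big_nat => i /andP[_ hi].
    have -> : (p.+3 - i = (p.+2 - i).+1)%N by lia.
    by rewrite (@prodQS _ _ Q _ _ p.+2) //; lia.
  rewrite E1 E2 !add1n !mulmxDl !mulmxDr !mulmxA mul1mx mulmx1.
  exact: acE.
by move=> [|p] // _; exact: main.
Qed.
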